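(* For every function $f:\mathcal X\times\mathcal Y\to\mathcal Z$ and $\epsilon,\delta\in(0,1)$, $\mathrm{srec}_{\epsilon,\delta}(f)=\max_\mu \mathrm{srec}^\mu_{\epsilon,\delta}(f)$, where the maximum is over probability distributions $\mu$ on $\mathcal X\times\mathcal Y$.
   Context: A rectangle is $A\times B$ with $A\subseteq\mathcal X,B\subseteq\mathcal Y$. For $z\in\mathcal Z$, $\mathrm{srec}^z_{\epsilon,\delta}(f)$ is the optimal value of the LP: minimize $\sum_R w_R$ over $w_R\ge 0$ (one variable per rectangle $R$) subject to $\sum_{R\ni(x,y)}w_R\ge1-\epsilon$ for all $(x,y)\in f^{-1}(z)$; $\sum_{R\ni(x,y)}w_R\le\delta$ for all $(x,y)\notin f^{-1}(z)$; $\sum_{R\ni(x,y)}w_R\le1$ for all $(x,y)$. $\mathrm{srec}_{\epsilon,\delta}(f)=\max_z\mathrm{srec}^z_{\epsilon,\delta}(f)$. For a nonnegative function $\mu$ on $\mathcal X\times\mathcal Y$, write $\mu_z(R)=\mu(R\cap f^{-1}(z))$ and $\mu_z=\mu_z(\mathcal X\times\mathcal Y)$. $\mathrm{srec}^{z,\mu}_{\epsilon,\delta}(f)$ is the optimal value of the LP: minimize $\sum_R w_R$ over $w_R\ge0$ subject to the covering constraint $\sum_{(x,y)\in f^{-1}(z)}\mu(x,y)\sum_{R\ni(x,y)}w_R\ge(1-\epsilon)\mu_z$, the packing constraints $\sum_{R\ni(x,y)}w_R\le\delta$ for all $(x,y)\notin f^{-1}(z)$, and $\sum_{R\ni(x,y)}w_R\le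 1$ for all $(x,y)$. $\mathrm{srec}^\mu_{\epsilon,\delta}(f)=\max_z\mathrm{srec}^{z,\mu}_{\epsilon,\delta}(f)$. *)

(* Defs.v *)
From HB Require Import structures.
From mathcomp Require Import all_boot all_order all_algebra.
Set Implicit Arguments. Unset Strict Implicit. Unset Printing Implicit Defensive.
Import Order.TTheory GRing.Theory Num.Theory.
Local Open Scope ring_scope.

Section Srec.
Variables (R : realFieldType) (X Y Z : finType).

Definition rect := ({set X} * {set Y})%type.

Definition weights := {ffun rect -> R}.

Definition cov (w : weights) (x : X) (y : Y) : R :=
  \sum_(Rc : rect | (x \in Rc.1) && (y \in Rc.2)) w Rc.

Definition cost (w : weights) : R := \sum_(Rc : rect) w Rc.

Definition lp_opt (P : weights -> Prop) (v : R) : Prop :=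
  (exists2 w, P w & cost w = v) /\ (forall w, P w -> v <= cost w).

Definition feas_z (f : X -> Y -> Z) (eps delta : R) (z : Z) (w : weights) : Prop :=
  [/\ forall Rc, 0 <= w Rc,
      forall x y, f x y = z -> 1 - eps <= cov w x y,
      forall x y, f x y <> z -> cov w x y <= delta
    & forall x y, cov w x y <= 1].

Definition feas_zmu (f : X -> Y -> Z) (eps delta : R) (mu : {ffun X * Y -> R})
    (z : Z) (w : weights) : Prop :=
  [/\ forall Rc, 0 <= w Rc,
      \sum_(p : X * Y | f p.1 p.2 == z) mu p * cov w p.1 p.2
        >= (1 - eps) * \sum_(p : X * Y | f p.1 p.2 == z) mu p,
      forall x y, f x y <> z -> cov w x y <= delta
    & forall x y, cov w x y <= 1].

Definition srec_z f eps delta z v := lp_opt (feas_z f eps delta z) v.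
Definition srec_zmu f eps delta mu z v := lp_opt (feas_zmu f eps delta mu z) v.

Definition max_over_z (P : Z -> R -> Prop) (v : R) : Prop :=
  (exists z, P z v) /\ (forall z u, P z u -> u <= v).

Definition srec f eps delta v := max_over_z (srec_z f eps delta) v.
Definition srec_mu f eps delta mu v := max_over_z (srec_zmu f eps delta mu) v.

Definition is_distr (mu : {ffun X * Y -> R}) : Prop :=
  (forall p, 0 <= mu p) /\ \sum_p mu p = 1.

Definition max_over_distr f eps delta v : Prop :=
  (exists2 mu, is_distr mu & srec_mu f eps delta mu v) /\
  (forall mu u, is_distr mu -> srec_mu f eps delta mu u -> u <= v).

End Srec.

(* Main.v *)
Require Import Defs.
From HB Require Import structures.
From mathcomp Require Import all_boot all_order all_algebra.
From mathcomp Require Import ring lra.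
Require Stdlib.Logic.ClassicalEpsilon.
Import Order.TTheory GRing.Theory Num.Theory.
Local Open Scope ring_scope.
Set Implicit Arguments. Unset Strict Implicit.
Section FM.
Variable (R : realFieldType) (J : finType).
Notation vec := {ffun option J -> R}.

Definition vadd (a b : vec) : vec := [ffun o => a o + b o].
Definition vscale (k : R) (a : vec) : vec := [ffun o => k * a o].
Definition vzero : vec := [ffun _ => 0].

Definition lhs (x : J -> R) (c : vec) : R := \sum_j c (Some j) * x j.
Definition sat x c := lhs x c <= c None.
Definition allsat x (L : seq vec) := forall c, c \in L -> sat x c.

Inductive cone (L : seq vec) : vec -> Prop :=
| cone0 : cone L vzero
| coneE c : c \in L -> cone L c
| coneD a b : cone L a -> cone L b -> cone L (vadd a b)
| coneZ k a : 0 <= k -> cone L a -> cone L (vscale k a).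

Lemma lhs_add x a b : lhs x (vadd a b) = lhs x a + lhs x b.
Proof. rewrite /lhs -big_split /=; apply: eq_bigr => j _; by rewrite ffunE mulrDl. Qed.
Lemma lhs_scale x k a : lhs x (vscale k a) = k * lhs x a.
Proof. rewrite /lhs mulr_sumr; apply: eq_bigr => j _; by rewrite ffunE mulrA. Qed.
Lemma lhs_zero x : lhs x vzero = 0.
Proof. by rewrite /lhs big1 // => j _; rewrite ffunE mul0r. Qed.

Lemma sat_cone x L e : allsat x L -> cone L e -> sat x e.
Proof.
move=> hL; elim=> {e} [|c cL|a b _ ha _ hb|k a k0 _ ha].
- by rewrite /sat lhs_zero ffunE.
- exact: hL.
- by rewrite /sat lhs_add ffunE; apply: lerD.
- by rewrite /sat lhs_scale ffunE; apply: ler_wpM2l.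
Qed.

Lemma cone_sub (L L' : seq vec) : (forall c, c \in L' -> cone L c) -> forall e, cone L' e -> cone L e.
Proof.
move=> h e; elim=> {e} [|c cL|a b _ ha _ hb|k a k0 _ ha].
- exact: cone0.
- exact: h.
- exact: coneD.
- exact: coneZ.
Qed.

Lemma cone_zero (L : seq vec) o : (forall c, c \in L -> c o = 0) -> forall e, cone L e -> e o = 0.
Proof.
move=> h e; elim=> {e} [|c cL|a b _ ha _ hb|k a k0 _ ha]; rewrite ?ffunE.
- by [].
- exact: h.
- by rewrite ha hb addr0.
- by rewrite ha mulr0.
Qed.

Lemma cone_cons h L e : cone (h :: L) e ->
  exists k u, [/\ 0 <= k, cone L u & forall o, e o = u o + k * h o].
Proof.
elim=> {e} [|c cL|a b _ ha _ hb|k a k0 _ ha].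
- exists 0, vzero; split=> //; [exact: cone0| by move=> o; rewrite !ffunE mul0r addr0].
- move: cL; rewrite inE => /orP [/eqP ->|cL].
    exists 1, vzero; split=> //; [exact: cone0| by move=> o; rewrite !ffunE mul1r add0r].
  exists 0, c; split=> //; [exact: coneE| by move=> o; rewrite mul0r addr0].
- case: ha => k1 [u1 [k10 u1c e1]]; case: hb => k2 [u2 [k20 u2c e2]].
  exists (k1 + k2), (vadd u1 u2); split; first exact: addr_ge0.
    exact: coneD.
  by move=> o; rewrite !ffunE e1 e2; ring.
- case: ha => k1 [u1 [k10 u1c e1]].
  exists (k * k1), (vscale k u1); split; first exact: mulr_ge0.
    exact: coneZ.
  by move=> o; rewrite !ffunE e1; ring.
Qed.

Lemma cone_cat L1 L2 e : cone (L1 ++ L2) e ->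
  exists e1 e2, [/\ cone L1 e1, cone L2 e2 & forall o, e o = e1 o + e2 o].
Proof.
elim=> {e} [|c cL|a b _ ha _ hb|k a k0 _ ha].
- exists vzero, vzero; split; try exact: cone0. by move=> o; rewrite !ffunE addr0.
- move: cL; rewrite mem_cat => /orP [cL|cL].
    exists c, vzero; split; [exact: coneE|exact: cone0|by move=> o; rewrite ffunE addr0].
  exists vzero, c; split; [exact: cone0|exact: coneE|by move=> o; rewrite ffunE add0r].
- case: ha => a1 [a2 [h1 h2 ea]]; case: hb => b1 [b2 [g1 g2 eb]].
  exists (vadd a1 b1), (vadd a2 b2); split; try exact: coneD.
  by move=> o; rewrite !ffunE ea eb; ring.
- case: ha => a1 [a2 [h1 h2 ea]].
  exists (vscale k a1), (vscale k a2); split; try exact: coneZ.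
  by move=> o; rewrite !ffunE ea; ring.
Qed.

Lemma cone_map (T : finType) (g : T -> vec) e : cone [seq g p | p <- enum T] e ->
  exists mu : T -> R, (forall p, 0 <= mu p) /\
     forall o, e o = \sum_p mu p * g p o.
Proof.
move=> H; elim: H => [|c cL|a b _ ha _ hb|k a k0 _ ha].
- by exists (fun _ => 0); split=> // o; rewrite ffunE big1 // => p _; rewrite mul0r.
- case/mapP: cL => p _ ->.
  exists (fun q => (q == p)%:R); split=> [q|o]; first exact: ler0n.
  rewrite (bigD1 p) //= eqxx mul1r big1 ?addr0 // => q /negbTE ->; by rewrite mul0r.
- case: ha => m1 [m10 e1]; case: hb => m2 [m20 e2].
  exists (fun p => m1 p + m2 p); split=> [p|o]; first exact: addr_ge0.
  rewrite ffunE e1 e2 -big_split /=; apply: eq_bigr => p _; ring.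
- case: ha => m1 [m10 e1].
  exists (fun p => k * m1 p); split=> [p|o]; first exact: mulr_ge0.
  rewrite ffunE e1 mulr_sumr; apply: eq_bigr => p _; ring.
Qed.

Section Step.
Variable i : J.
Definition Pos (L : seq vec) := [seq c : vec <- L | 0 < c (Some i)].
Definition Neg (L : seq vec) := [seq c : vec <- L | c (Some i) < 0].
Definition Zer (L : seq vec) := [seq c : vec <- L | c (Some i) == 0].
Definition comb (p n : vec) : vec := vadd (vscale (- n (Some i)) p) (vscale (p (Some i)) n).
Definition elim1 L := Zer L ++ [seq comb p n | p <- Pos L, n <- Neg L].

Lemma elim1_cone L c : c \in elim1 L -> cone L c.
Proof.
rewrite mem_cat => /orP [|/allpairsP [[p n] /= [pP nN ->]]].
  by rewrite mem_filter => /andP [_ cL]; exact: coneE.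
move: pP nN; rewrite !mem_filter => /andP [p0 pL] /andP [n0 nL].
apply: coneD; apply: coneZ; try exact: coneE.
- by rewrite oppr_ge0 ltW.
- exact: ltW.
Qed.

Lemma elim1_zero L c : c \in elim1 L -> c (Some i) = 0.
Proof.
rewrite mem_cat => /orP [|/allpairsP [[p n] /= [pP nN ->]]].
  by rewrite mem_filter => /andP [/eqP].
by rewrite !ffunE; ring.
Qed.

Definition upd (x : J -> R) t := fun j => if j == i then t else x j.
Definition rest (x : J -> R) (c : vec) := \sum_(j | j != i) c (Some j) * x j.

Lemma lhs_split x c : lhs x c = c (Some i) * x i + rest x c.
Proof. by rewrite /lhs (bigD1 i). Qed.

Lemma rest_upd x t c : rest (upd x t) c = rest x c.
Proof. by apply: eq_bigr => j /negbTE hj; rewrite /upd hj. Qed.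

Lemma lhs_upd x t c : lhs (upd x t) c = c (Some i) * t + rest x c.
Proof. by rewrite lhs_split rest_upd /upd eqxx. Qed.

Lemma ex_max (T : eqType) (s : seq T) (F : T -> R) a0 : a0 \in s ->
  exists2 a, a \in s & forall b, b \in s -> F b <= F a.
Proof.
elim: s a0 => [//|a s IH] a0 _.
case: s IH => [|b s] IH.
  by exists a; rewrite ?inE // => c; rewrite inE => /eqP ->.
case: (IH b (mem_head _ _)) => c cs hc.
case: (leP (F a) (F c)) => h.
  exists c; first by rewrite inE cs orbT.
  by move=> d; rewrite inE => /orP [/eqP ->|/hc].
exists a; first by rewrite inE eqxx.
move=> d; rewrite inE => /orP [/eqP ->//|/hc hd]. exact: (le_trans hd (ltW h)).
Qed.

Lemma elim1_sat x L : allsat x (elim1 L) -> exists t, allsat (upd x t) L.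
Proof.
move=> hx.
pose low (n : vec) := (n None - rest x n) / n (Some i).
pose up (p : vec) := (p None - rest x p) / p (Some i).
have hZ t c : c \in L -> c (Some i) = 0 -> sat (upd x t) c.
  move=> cL c0; have : c \in elim1 L by rewrite mem_cat mem_filter c0 eqxx cL.
  by move/hx; rewrite /sat lhs_upd lhs_split c0 !mul0r.
have hP t p : p \in Pos L -> t <= up p -> sat (upd x t) p.
  rewrite mem_filter => /andP [p0 _]; rewrite /up ler_pdivlMr // => h.
  by rewrite /sat lhs_upd -lerBrDr mulrC.
have hN t n : n \in Neg L -> low n <= t -> sat (upd x t) n.
  rewrite mem_filter => /andP [n0 _]; rewrite /low ler_ndivrMr // => h.
  by rewrite /sat lhs_upd -lerBrDr mulrC.
have hPN p n : p \in Pos L -> n \in Neg L -> low n <= up p.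
  move=> pP nN; have := hx (comb p n).
  rewrite mem_cat [X in _ || X](_ : _ = true) ?orbT; last first.
    by apply/allpairsP; exists (p, n).
  move=> /(_ isT); rewrite /sat lhs_add !lhs_scale !lhs_split !ffunE.
  move: pP nN; rewrite !mem_filter => /andP [p0 _] /andP [n0 _].
  rewrite /low /up.
  set a := n (Some i); set b := p (Some i); set A := n None - rest x n;
  set B := p None - rest x p => h.
  have hab : 0 <= - a * B + b * A.
    have -> : - a * B + b * A = (- a * p None + b * n None) - (- a * (b * x i + rest x p) + b * (a * x i + rest x n)).
      by rewrite /A /B; ring.
    by rewrite subr_ge0.
  have a0 : a != 0 by rewrite lt_eqF.
  have b0' : b != 0 by rewrite gt_eqF.
  rewrite -subr_le0.
  have -> : A / a - B / b = (- a * B + b * A) / (a * b).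
    by field; apply/andP; split.
  have ab : a * b < 0 by rewrite nmulr_rlt0.
  by rewrite mulrC nmulr_rle0 // invr_lt0.
have inN c : c \in L -> c (Some i) < 0 -> c \in Neg L by move=> cL h; rewrite mem_filter h cL.
have inP c : c \in L -> 0 < c (Some i) -> c \in Pos L by move=> cL h; rewrite mem_filter h cL.
case NL: (Neg L) => [|n0 N'].
  case PL: (Pos L) => [|p0 P'].
    exists (x i) => c cL.
    have : c (Some i) = 0.
      case: (ltgtP (c (Some i)) 0) => // h.
        by move: (inN c cL h); rewrite NL.
      by move: (inP c cL h); rewrite PL.
    exact: hZ.
  have [p' pP hp] := ex_max (fun p => - up p) (mem_head p0 P').
  rewrite -PL in pP hp.
  exists (up p') => c cL.
  case: (ltgtP (c (Some i)) 0) => h.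
  - by move: (inN c cL h); rewrite NL.
  - apply: hP; first by rewrite mem_filter h cL.
    by rewrite -lerN2; apply: hp; rewrite mem_filter h cL.
  - exact: hZ.
have [n' nN hn] := ex_max low (mem_head n0 N').
rewrite -NL in nN hn.
exists (low n') => c cL.
case: (ltgtP (c (Some i)) 0) => h.
- by apply: hN; [rewrite mem_filter h cL| apply: hn; rewrite mem_filter h cL].
- by apply: hP; [rewrite mem_filter h cL| apply: hPN => //; rewrite mem_filter h cL].
- exact: hZ.
Qed.
End Step.

Lemma elim_seq (S : seq J) (L : seq vec) : exists L' : seq vec,
  [/\ (forall c, c \in L' -> cone L c),
      (forall c j, c \in L' -> j \in S -> c (Some j) = 0) &
      (forall x, allsat x L' -> exists x', (forall j, j \notin S -> x' j = x j) /\ allsat x' L)].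
Proof.
elim: S L => [|i S IH] L.
  exists L; split=> //; first by move=> c cL; exact: coneE.
  by move=> x hx; exists x.
have [L2 [hc hz hx]] := IH (elim1 i L).
exists L2; split.
- move=> c cL2; apply: (cone_sub (L' := elim1 i L)) (hc _ cL2) => d dL.
  exact: elim1_cone dL.
- move=> c j cL2; rewrite inE => /orP [/eqP ->|jS]; last exact: hz.
  apply: (cone_zero (L := elim1 i L)) (hc _ cL2) => d dL; exact: elim1_zero dL.
- move=> x /hx [x1 [ex1 s1]].
  have [t ht] := elim1_sat s1.
  exists (upd i x1 t); split=> // j; rewrite inE negb_or => /andP [ji jS].
  by rewrite /upd (negbTE ji) ex1.
Qed.

Lemma lhs_only (s : J) (c : vec) x : (forall j, j != s -> c (Some j) = 0) ->
  lhs x c = c (Some s) * x s.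
Proof.
move=> h; rewrite (lhs_split s) /rest big1 ?addr0 // => j /h ->; by rewrite mul0r.
Qed.

Lemma core (s : J) (h : vec) (L : seq vec) :
  (forall c, c \in L -> c (Some s) = 0) -> h (Some s) = -1 -> h None = 0 ->
  (exists x, allsat x L) -> (exists beta, forall x, allsat x L -> beta <= rest s x h) ->
  exists m, [/\ (exists2 x, allsat x L & rest s x h = m),
    (forall x, allsat x L -> m <= rest s x h) &
    (exists u, [/\ cone L u, (forall j, j != s -> u (Some j) = - h (Some j)),
                   u (Some s) = 0 & u None = - m])].
Proof.
move=> hL hs h0 [x0 hx0] [beta hb].
have [L' [hc hz hx]] := elim_seq [seq j <- enum J | j != s] (h :: L).
have hz' c j : c \in L' -> j != s -> c (Some j) = 0.
  by move=> cL js; apply: hz cL _; rewrite mem_filter js mem_enum.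
have lhsL' c x : c \in L' -> lhs x c = c (Some s) * x s.
  by move=> cL; apply: lhs_only => j; apply: hz'.
have satL_upd x t : allsat x L -> allsat (upd s x t) L.
  move=> hx1 c cL; have := hx1 c cL; rewrite /sat lhs_upd (lhs_split s) hL //.
  by rewrite !mul0r.
have lhs_h x : lhs x h = - x s + rest s x h by rewrite (lhs_split s) hs mulN1r.
pose y0 := upd s x0 (rest s x0 h).
have hy0 : allsat y0 (h :: L).
  move=> c; rewrite inE => /orP [/eqP ->|cL]; last exact: satL_upd.
  by rewrite /sat lhs_h /y0 rest_upd /upd eqxx h0 addNr.
have gy0 c : c \in L' -> c (Some s) * y0 s <= c None.
  by move=> cL; rewrite -lhsL' //; apply: (sat_cone hy0); apply: hc.
have back t : (forall c, c \in L' -> c (Some s) * t <= c None) ->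
    exists2 x', allsat x' L & rest s x' h <= t.
  move=> ht.
  have : allsat (upd s y0 t) L'.
    by move=> c cL; rewrite /sat lhsL' // /upd eqxx; apply: ht.
  move=> /hx [x' [ex' sx']].
  have xs : x' s = t.
    rewrite ex' ?/upd ?eqxx // mem_filter eqxx //.
  exists x'; first by move=> c cL; apply: sx'; rewrite inE cL orbT.
  have := sx' h (mem_head _ _); rewrite /sat lhs_h h0 xs.
  by rewrite addrC subr_le0.
pose bnd (c : vec) := c None / c (Some s).
have inLo c : c \in L' -> c (Some s) < 0 -> c \in [seq c : vec <- L' | c (Some s) < 0].
  by move=> cL cs; rewrite mem_filter cs cL.
case Lo: [seq c : vec <- L' | c (Some s) < 0] => [|c0 Lo'].
  pose t := Num.min (y0 s) (beta - 1).
  have [x' /hb hb1 hb2] : exists2 x', allsat x' L & rest s x' h <= t.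
    apply: back => c cL; apply: le_trans (gy0 c cL).
    have cs : 0 <= c (Some s).
      rewrite leNgt; apply/negP => cs.
      by move: (inLo c cL cs); rewrite Lo.
    by apply: ler_wpM2l => //; rewrite ge_min lexx.
  have : t <= beta - 1 by rewrite ge_min lexx orbT.
  move: (le_trans hb1 hb2); lra.
have [cs csL hcs] := ex_max bnd (mem_head c0 Lo').
rewrite -Lo in csL hcs.
move: (csL); rewrite mem_filter => /andP [cs0 csL'].
pose m := bnd cs.
have [k [u [k0 uc eu]]] := cone_cons (hc _ csL').
have us : u (Some s) = 0 by apply: (cone_zero hL uc).
have ek : cs (Some s) = - k by rewrite eu us hs; ring.
have kp : 0 < k by rewrite -oppr_lt0 -ek.
have kn : k != 0 by rewrite gt_eqF.
pose u' := vscale k^-1 u.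
have u'c : cone L u' by apply: coneZ => //; rewrite invr_ge0 ltW.
have u'j j : j != s -> u' (Some j) = - h (Some j).
  move=> js; rewrite /u' ffunE.
  have : cs (Some j) = 0 by apply: hz' csL' js.
  rewrite eu => e; have -> : u (Some j) = - (k * h (Some j)) by apply/eqP; rewrite -addr_eq0 e.
  by field.
have u's : u' (Some s) = 0 by rewrite /u' ffunE us mulr0.
have u'0 : u' None = - m.
  rewrite /u' ffunE /m /bnd ek eu h0 mulr0 addr0.
  by field.
have lower x : allsat x L -> m <= rest s x h.
  move=> hxL; have := sat_cone hxL u'c; rewrite /sat (lhs_split s) u's mul0r add0r u'0.
  have -> : rest s x u' = - rest s x h.
    rewrite /rest -sumrN; apply: eq_bigr => j js; rewrite u'j //; ring.
  by rewrite lerN2.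
have gm : forall c, c \in L' -> c (Some s) * m <= c None.
  move=> c cL; case: (ltP (c (Some s)) 0) => cs1.
    have := hcs c (inLo c cL cs1); rewrite /bnd -/m ler_ndivrMr // mulrC //.
  apply: le_trans (gy0 c cL); apply: ler_wpM2l => //.
  have := gy0 cs csL'; rewrite mulrC -ler_ndivrMr //.
have [x' hx'1 hx'2] := back m gm.
exists m; split=> //.
- exists x' => //; apply: le_anti; rewrite hx'2 lower //.
- by exists u'; split.
Qed.
End FM.
Lemma sum_option_neq (R : nmodType) (T:finType) (F : option T -> R) :
  \sum_(j | j != None) F j = \sum_t F (Some t).
Proof.
rewrite (reindex_omap Some id) //=; last by case.
by apply: eq_bigl => t; rewrite eqxx.
Qed.

Lemma sum_option (R : nmodType) (T:finType) (F : option T -> R) :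
  \sum_j F j = F None + \sum_t F (Some t).
Proof. by rewrite (bigD1 None) //= sum_option_neq. Qed.

Lemma sum_ind (R : realFieldType) (T : finType) (P : pred T) q :
  \sum_(p | P p) ((p == q)%:R : R) = (P q)%:R.
Proof.
rewrite big_mkcond (bigD1 q) //= eqxx big1 ?addr0 //; first by case: (P q).
by move=> p /negbTE ->; case: (P p).
Qed.

Lemma sum_ind2 (R : realFieldType) (T : finType) (w : T -> R) q :
  \sum_p ((p == q)%:R : R) * w p = w q.
Proof.
rewrite (bigD1 q) //= eqxx mul1r big1 ?addr0 // => p /negbTE ->; by rewrite mul0r.
Qed.

Section App.
Variables (R : realFieldType) (X Y Z : finType) (f : X -> Y -> Z) (eps delta : R).
Notation rt := (rect X Y).
Notation J := (option rt).
Notation wt := (weights R X Y).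
Notation vecA := {ffun option J -> R}.

Definition mkc (a : rt -> R) (b : R) : vecA :=
  [ffun o => match o with None => b | Some None => 0 | Some (Some r) => a r end].
Definition restrict (x : J -> R) : wt := [ffun r => x (Some r)].
Definition ext (w : wt) : J -> R := fun j => if j is Some r then w r else 0.
Lemma restrict_ext w : restrict (ext w) = w.
Proof. by apply/ffunP => r; rewrite ffunE. Qed.
Definition hv : vecA :=
  [ffun o => match o with None => 0 | Some None => -1 | Some (Some _) => 1 end].

Lemma lhs_mkc x a b : lhs x (mkc a b) = \sum_r a r * restrict x r.
Proof.
rewrite /lhs sum_option !ffunE mul0r add0r; apply: eq_bigr => r _; by rewrite !ffunE.
Qed.
Lemma sat_mkc x a b : sat x (mkc a b) <-> \sum_r a r * restrict x r <= b.
Proof. by rewrite /sat lhs_mkc ffunE. Qed.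

Lemma rest_hv x : rest None x hv = cost (restrict x).
Proof.
rewrite /rest sum_option_neq /cost; apply: eq_bigr => r _; by rewrite !ffunE mul1r.
Qed.

Definition covf (p : X * Y) (r : rt) : R := ((p.1 \in r.1) && (p.2 \in r.2))%:R.
Lemma sum_covf p (w : wt) : \sum_r covf p r * w r = cov w p.1 p.2.
Proof.
rewrite /cov [RHS]big_mkcond; apply: eq_bigr => r _; rewrite /covf.
by case: ifP => _; rewrite ?mul1r ?mul0r.
Qed.

Definition zc := mkc (fun _ => 0) 0.
Lemma sat_zc x : sat x zc.
Proof. by apply/sat_mkc; rewrite big1 // => r _; rewrite mul0r. Qed.

Definition negs := [seq mkc (fun r => - (r == r0)%:R) 0 | r0 <- enum {: rt}].
Definition packs z := [seq (if f p.1 p.2 == z then zc else mkc (covf p) delta) | p <- enum {: X * Y}].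
Definition ones := [seq mkc (covf p) 1 | p <- enum {: X * Y}].
Definition restL z := negs ++ packs z ++ ones.
Definition gcov z (p : X * Y) := if f p.1 p.2 == z then mkc (fun r => - covf p r) (-(1 - eps)) else zc.
Definition covs z := [seq gcov z p | p <- enum {: X * Y}].
Definition Lz z := covs z ++ restL z.
Definition Lmu (mu : {ffun X * Y -> R}) z :=
  mkc (fun r => - \sum_(p | f p.1 p.2 == z) mu p * covf p r)
      (- ((1 - eps) * \sum_(p | f p.1 p.2 == z) mu p)) :: restL z.

Lemma allsat_cat x (L1 L2 : seq vecA) : allsat x (L1 ++ L2) <-> allsat x L1 /\ allsat x L2.
Proof.
split=> [h|[h1 h2] c]; last by rewrite mem_cat => /orP [/h1|/h2].
by split=> c cL; apply: h; rewrite mem_cat cL ?orbT.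
Qed.
Lemma allsat_map x (T : finType) (g : T -> vecA) :
  allsat x [seq g t | t <- enum {: T}] <-> forall t, sat x (g t).
Proof.
split=> [h t|h c /mapP [t _ ->] //]; apply: h; apply: map_f; by rewrite mem_enum.
Qed.
Lemma allsat_cons x (c : vecA) L : allsat x (c :: L) <-> sat x c /\ allsat x L.
Proof.
split=> [h|[h1 h2] d]; last by rewrite inE => /orP [/eqP ->|/h2].
by split=> [|d dL]; apply: h; rewrite inE ?eqxx ?dL ?orbT.
Qed.

Lemma restL_iff x z : allsat x (restL z) <->
  [/\ forall r, 0 <= restrict x r,
      forall a b, f a b <> z -> cov (restrict x) a b <= delta
    & forall a b, cov (restrict x) a b <= 1].
Proof.
rewrite /restL !allsat_cat !allsat_map.
have hn r0 : sat x (mkc (fun r => - (r == r0)%:R) 0) <-> 0 <= restrict x r0.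
  rewrite sat_mkc.
  have -> : \sum_r - (r == r0)%:R * restrict x r = - restrict x r0.
    by rewrite -(sum_ind2 (restrict x) r0) -sumrN; apply: eq_bigr => r _; rewrite mulNr.
  by rewrite oppr_le0.
split.
- move=> [h1 [h2 h3]]; split.
  + by move=> r; apply/hn.
  + move=> a b fab; have := h2 (a, b); rewrite /=; move/eqP/negbTE: fab => ->.
    by move/sat_mkc; rewrite sum_covf.
  + by move=> a b; have := h3 (a, b); move/sat_mkc; rewrite sum_covf.
- move=> [h1 h2 h3]; split; last split.
  + by move=> r; apply/hn.
  + case=> a b /=; case: eqP => fab; first exact: sat_zc.
    by apply/sat_mkc; rewrite sum_covf; apply: h2.
  + by case=> a b; apply/sat_mkc; rewrite sum_covf; apply: h3.
Qed.

Lemma Lz_iff x z : allsat x (Lz z) <-> feas_z f eps delta z (restrict x).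
Proof.
rewrite /Lz allsat_cat restL_iff /covs allsat_map.
have hg : (forall p, sat x (gcov z p)) <->
     (forall a b, f a b = z -> 1 - eps <= cov (restrict x) a b).
  split.
  - move=> h a b fab; have := h (a, b); rewrite /gcov /= fab eqxx.
    move/sat_mkc.
    rewrite (eq_bigr (fun r => - (covf (a, b) r * restrict x r))); last by move=> r _; rewrite mulNr.
    by rewrite sumrN lerN2 sum_covf.
  - move=> h [a b]; rewrite /gcov /=; case: eqP => fab; last exact: sat_zc.
    apply/sat_mkc.
    rewrite (eq_bigr (fun r => - (covf (a, b) r * restrict x r))); last by move=> r _; rewrite mulNr.
    by rewrite sumrN lerN2 sum_covf; apply: h.
split; first by move=> [/hg h1 [h2 h3 h4]]; split.
by move=> [h1 /hg h2 h3 h4]; split.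
Qed.

Lemma sum_mu_cov (mu : {ffun X * Y -> R}) z (w : wt) :
  \sum_r (- \sum_(p | f p.1 p.2 == z) mu p * covf p r) * w r =
  - \sum_(p | f p.1 p.2 == z) mu p * cov w p.1 p.2.
Proof.
rewrite (eq_bigr (fun r => - ((\sum_(p | f p.1 p.2 == z) mu p * covf p r) * w r))); last first.
  by move=> r _; rewrite mulNr.
rewrite sumrN; congr (- _).
rewrite (eq_bigr (fun r => \sum_(p | f p.1 p.2 == z) mu p * (covf p r * w r))); last first.
  by move=> r _; rewrite mulr_suml; apply: eq_bigr => p _; rewrite mulrA.
rewrite exchange_big /=; apply: eq_bigr => p _; by rewrite -mulr_sumr sum_covf.
Qed.

Lemma Lmu_iff x mu z : allsat x (Lmu mu z) <-> feas_zmu f eps delta mu z (restrict x).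
Proof.
rewrite /Lmu allsat_cons restL_iff sat_mkc sum_mu_cov lerN2.
split; first by move=> [h0 [h1 h2 h3]]; split.
by move=> [h1 h0 h2 h3]; split.
Qed.

Lemma Lz_s z c : c \in Lz z -> c (Some None) = 0.
Proof.
rewrite /Lz /restL !mem_cat => /or4P [] /mapP [p _ ->]; rewrite /gcov ?ffunE //;
  by case: ifP; rewrite ffunE.
Qed.
Lemma Lmu_s mu z c : c \in Lmu mu z -> c (Some None) = 0.
Proof.
rewrite inE /restL !mem_cat => /orP [/eqP ->|/or3P [] /mapP [p _ ->]]; rewrite ?ffunE //;
  by case: ifP; rewrite ffunE.
Qed.

Lemma lp_from (L : seq vecA) (P : wt -> Prop) :
  (forall c, c \in L -> c (Some None) = 0) ->
  (forall x, allsat x L <-> P (restrict x)) ->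
  (exists w, P w) -> (forall w, P w -> forall r, 0 <= w r) ->
  exists m, lp_opt P m /\
    exists u, [/\ cone L u, (forall j, j != None -> u (Some j) = - hv (Some j)),
                  u (Some None) = 0 & u None = - m].
Proof.
move=> hs hiff [w0 hw0] hpos.
have := @core R J None hv L hs; rewrite !ffunE => /(_ erefl erefl).
case.
- by exists (ext w0); apply/hiff; rewrite restrict_ext.
- exists 0 => x /hiff /hpos hx; rewrite rest_hv /cost; exact: sumr_ge0.
move=> m [[x hx <-] hlow hu].
exists (rest None x hv); split=> //; split.
- by exists (restrict x); [apply/hiff|rewrite rest_hv].
- move=> w hw; have : allsat (ext w) L by apply/hiff; rewrite restrict_ext.
  by move/hlow; rewrite !rest_hv restrict_ext.
Qed.


Definition w1 z : wt := [ffun r => \sum_(p : (X * Y)%type | f p.1 p.2 == z)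
   ((r == ([set p.1], [set p.2])) : bool)%:R].

Lemma cov_w1 z a b : cov (w1 z) a b = (f a b == z)%:R.
Proof.
rewrite /cov (eq_bigr (fun r => \sum_(p : (X * Y)%type | f p.1 p.2 == z)
   ((r == ([set p.1], [set p.2])) : bool)%:R)); last by move=> r _; rewrite ffunE.
rewrite exchange_big /=.
rewrite (eq_bigr (fun p => ((p == (a, b)) : bool)%:R)).
  by rewrite (@sum_ind R _ (fun p : (X * Y)%type => f p.1 p.2 == z) (a, b)).
case=> p1 p2 _ /=; rewrite (@sum_ind R _ (fun r : rt => (a \in r.1) && (b \in r.2))) /=.
by rewrite !in_set1 xpair_eqE (eq_sym a) (eq_sym b).
Qed.

Hypothesis eps0 : 0 < eps.
Hypothesis delta0 : 0 < delta.
Hypothesis eps1 : eps < 1.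
Hypothesis hXY : (0 < #|{: X * Y}|)%N.

Lemma w1_pos z r : 0 <= w1 z r.
Proof. by rewrite ffunE; apply: sumr_ge0 => p _; apply: ler0n. Qed.

Lemma w1_feas z : feas_z f eps delta z (w1 z).
Proof.
split.
- exact: w1_pos.
- by move=> a b fab; rewrite cov_w1 fab eqxx /= gerBl ltW.
- by move=> a b /eqP/negbTE; rewrite cov_w1 => ->; exact: ltW.
- by move=> a b; rewrite cov_w1; case: (_ == _).
Qed.

Lemma feas_z_zmu (mu : {ffun X * Y -> R}) z w : (forall p, 0 <= mu p) ->
  feas_z f eps delta z w -> feas_zmu f eps delta mu z w.
Proof.
move=> mu0 [h1 h2 h3 h4]; split=> //.
rewrite mulr_sumr; apply: ler_sum => p /eqP fp.
by rewrite mulrC; apply: ler_wpM2l => //; apply: h2.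
Qed.

Lemma exists_z z : exists m, lp_opt (feas_z f eps delta z) m /\
    exists u, [/\ cone (Lz z) u, (forall j, j != None -> u (Some j) = - hv (Some j)),
                  u (Some None) = 0 & u None = - m].
Proof.
apply: lp_from.
- exact: Lz_s.
- by move=> x; apply: Lz_iff.
- by exists (w1 z); exact: w1_feas.
- by move=> w [].
Qed.

Lemma exists_zmu (mu : {ffun X * Y -> R}) z : (forall p, 0 <= mu p) -> exists m, lp_opt (feas_zmu f eps delta mu z) m.
Proof.
move=> mu0.
have [m [hm _]] : exists m, lp_opt (feas_zmu f eps delta mu z) m /\
    exists u, [/\ cone (Lmu mu z) u, (forall j, j != None -> u (Some j) = - hv (Some j)),
                  u (Some None) = 0 & u None = - m].
  apply: lp_from.
  - exact: Lmu_s.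
  - by move=> x; apply: Lmu_iff.
  - by exists (w1 z); apply: feas_z_zmu => //; exact: w1_feas.
  - by move=> w [].
by exists m.
Qed.

Lemma lp_uniq (P : wt -> Prop) v1 v2 : lp_opt P v1 -> lp_opt P v2 -> v1 = v2.
Proof.
move=> [[w1' p1 <-] l1] [[w2' p2 <-] l2].
by apply: le_anti; rewrite l1 // l2.
Qed.

Lemma lhs_ext_cost (u : vecA) w : (forall j, j != None -> u (Some j) = - hv (Some j)) ->
  u (Some None) = 0 -> lhs (ext w) u = - cost w.
Proof.
move=> hj hs; rewrite /lhs sum_option hs mul0r add0r /cost -sumrN.
by apply: eq_bigr => r _; rewrite hj // ffunE mulN1r.
Qed.

Lemma duality z m u : cone (Lz z) u -> (forall j, j != None -> u (Some j) = - hv (Some j)) ->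
  u (Some None) = 0 -> u None = - m ->
  exists2 mu, is_distr mu & forall w, feas_zmu f eps delta mu z w -> m <= cost w.
Proof.
move=> uc hj hs h0.
have [e1 [e2 [c1 c2 eu]]] := cone_cat uc.
have [mu [mu0 emu]] := cone_map c1.
pose M := \sum_(p | f p.1 p.2 == z) mu p.
have M0 : 0 <= M by apply: sumr_ge0.
pose N := #|{: X * Y}|%:R : R.
pose mu' : {ffun X * Y -> R} := if M == 0 then [ffun _ => N^-1]
  else [ffun p => if f p.1 p.2 == z then mu p / M else 0].
have key : forall w, feas_zmu f eps delta mu' z w ->
    (1 - eps) * M <= \sum_(p | f p.1 p.2 == z) mu p * cov w p.1 p.2.
  move=> w [_ hw _ _]; rewrite /mu' in hw.
  case: eqP hw => [M00|/eqP Mn0] hw.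
    rewrite M00 mulr0; apply: sumr_ge0 => p fp.
    by rewrite (psumr_eq0P (fun p _ => mu0 p) M00 fp) mul0r.
  have Mp : 0 < M by rewrite lt_def Mn0 M0.
  move: hw.
  rewrite [Q in _ <= Q](eq_bigr (fun p => mu p / M * cov w p.1 p.2)); last first.
    by move=> p fp; rewrite ffunE fp /=.
  rewrite [Q in _ * Q <= _](eq_bigr (fun p => mu p / M)); last first.
    by move=> p fp; rewrite ffunE fp /=.
  rewrite -mulr_suml -/M divff // mulr1.
  rewrite (eq_bigr (fun p => (mu p * cov w p.1 p.2) / M)); last first.
    by move=> p _; rewrite mulrAC.
  by rewrite -mulr_suml ler_pdivlMr.
exists mu'.
  rewrite /mu'; case: eqP => [M00|/eqP Mn0]; split.
  - by move=> p; rewrite ffunE invr_ge0 ler0n.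
  - rewrite (eq_bigr (fun _ => N^-1)); last by move=> p _; rewrite ffunE.
    rewrite sumr_const -/N -[_ *+ _]mulr_natl divff //.
    by rewrite pnatr_eq0 -lt0n hXY.
  - move=> p; rewrite ffunE; case: ifP => _ //.
    by apply: divr_ge0 => //.
  - rewrite (eq_bigr (fun p => if f p.1 p.2 == z then mu p / M else 0)); last first.
      by move=> p _; rewrite ffunE.
    by rewrite -big_mkcond /= -mulr_suml divff.
move=> w hw.
have hx : allsat (ext w) (restL z).
  by apply/restL_iff; rewrite restrict_ext; case: hw.
have s2 := sat_cone hx c2.
have s1 : sat (ext w) e1.
  rewrite /sat.
  have -> : lhs (ext w) e1 = \sum_p mu p * lhs (ext w) (gcov z p).
    rewrite /lhs (eq_bigr (fun j => \sum_p mu p * (gcov z p (Some j) * ext w j))); last first.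
      by move=> j _; rewrite emu mulr_suml; apply: eq_bigr => p _; rewrite mulrA.
    rewrite exchange_big /=; apply: eq_bigr => p _; by rewrite mulr_sumr.
  rewrite emu.
  have hl p : lhs (ext w) (gcov z p) = if f p.1 p.2 == z then - cov w p.1 p.2 else 0.
    rewrite /gcov; case: ifP => _.
      rewrite lhs_mkc restrict_ext.
      rewrite (eq_bigr (fun r => - (covf p r * w r))); last by move=> r _; rewrite mulNr.
      by rewrite sumrN sum_covf.
    by rewrite lhs_mkc big1 // => r _; rewrite ffunE mul0r.
  have hn p : gcov z p None = if f p.1 p.2 == z then - (1 - eps) else 0.
    by rewrite /gcov; case: ifP => _; rewrite ffunE.
  rewrite (eq_bigr (fun p => if f p.1 p.2 == z then - (mu p * cov w p.1 p.2) else 0)); last first.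
    by move=> p _; rewrite hl; case: ifP; rewrite ?mulrN ?mulr0.
  rewrite [Q in _ <= Q](eq_bigr (fun p => if f p.1 p.2 == z then - (mu p * (1 - eps)) else 0)); last first.
    by move=> p _; rewrite hn; case: ifP; rewrite ?mulrN ?mulr0.
  rewrite -!big_mkcond /= !sumrN lerN2 -mulr_suml mulrC.
  exact: key.
have su : lhs (ext w) u <= u None.
  rewrite /lhs (eq_bigr (fun j => e1 (Some j) * ext w j + e2 (Some j) * ext w j)); last first.
    by move=> j _; rewrite eu mulrDl.
  by rewrite big_split /= eu; apply: lerD.
by move: su; rewrite lhs_ext_cost // h0 lerN2.
Qed.

Lemma zmu_le_z (mu : {ffun X * Y -> R}) z u m : (forall p, 0 <= mu p) ->
  lp_opt (feas_zmu f eps delta mu z) u -> lp_opt (feas_z f eps delta z) m -> u <= m.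
Proof.
move=> mu0 [_ hu] [[w hw <-] _]; apply: hu; exact: feas_z_zmu.
Qed.
End App.

Lemma max_rel (R : realFieldType) (T : finType) (P : T -> R -> Prop) (t0 : T) :
  (forall t, exists v, P t v) -> (forall t v1 v2, P t v1 -> P t v2 -> v1 = v2) ->
  exists t v, P t v /\ forall t' v', P t' v' -> v' <= v.
Proof.
move=> hex huniq.
pose g t := proj1_sig (ClassicalEpsilon.constructive_indefinite_description _ (hex t)).
have hg t : P t (g t) := proj2_sig (ClassicalEpsilon.constructive_indefinite_description _ (hex t)).
have [ts _ hts] := @ex_max R _ (enum T) g t0 (mem_enum _ _).
exists ts, (g ts); split=> // t' v' hv'.
rewrite (huniq _ _ _ hv' (hg t')); apply: hts; exact: mem_enum.
Qed.
Unset Implicit Arguments.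
Theorem mainTheorem3 (R : realFieldType) (X Y Z : finType) (f : X -> Y -> Z)
    (eps delta : R) :
  (0 < #|X|)%N -> (0 < #|Y|)%N ->
  0 < eps < 1 -> 0 < delta < 1 ->
  exists v : R,
    srec f eps delta v /\
    (forall mu, is_distr mu -> exists u, srec_mu f eps delta mu u) /\
    max_over_distr f eps delta v.
Proof.
move=> hX hY /andP [e0 e1] /andP [d0 d1].
have hXY : (0 < #|{: X * Y}|)%N by rewrite card_prod muln_gt0 hX hY.
have [x0 _] := card_gt0P hX.
have [y0 _] := card_gt0P hY.
have lpu (P : weights R X Y -> Prop) := @lp_uniq R X Y P.
have [zs [v [hv hvmax]]] := @max_rel R Z (fun z v => srec_z f eps delta z v) (f x0 y0)
  (fun z => let: ex_intro m (conj hm _) := exists_z f e0 d0 z in ex_intro _ m hm)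
  (fun z v1 v2 => lpu _ v1 v2).
exists v; split; last split.
- by split=> //; exists zs.
- move=> mu [mu0 _].
  have [t [u [hu humax]]] := @max_rel R Z (fun z v => srec_zmu f eps delta mu z v) (f x0 y0)
    (fun z => exists_zmu f e0 d0 z mu0) (fun z v1 v2 => lpu _ v1 v2).
  by exists u; split=> //; exists t.
- have [m [hm [u [uc uj us u0]]]] := exists_z f e0 d0 zs.
  have emv : m = v := lpu _ _ _ hm hv.
  have [mu hmu hdual] := duality hXY uc uj us u0.
  have mu0 : forall p, 0 <= mu p by case: hmu.
  have [m' hm'] := exists_zmu f e0 d0 zs mu0.
  have em' : m' = v.
    apply: le_anti; rewrite (zmu_le_z mu0 hm' hv) /=.
    case: hm' => [[w hw <-] _]; rewrite -emv; exact: hdual.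
  split.
    exists mu => //; split; first by exists zs; rewrite -em'.
    move=> z u' hu'.
    have [mz hmz] : exists mz, srec_z f eps delta z mz.
      by have [mz [hmz _]] := exists_z f e0 d0 z; exists mz.
    exact: le_trans (zmu_le_z mu0 hu' hmz) (hvmax _ _ hmz).
  move=> mu1 u1 [mu10 _] [[z hz] _].
  have [mz [hmz _]] := exists_z f e0 d0 z.
  exact: le_trans (zmu_le_z mu10 hz hmz) (hvmax _ _ hmz).
Qed.
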